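(* Let $G$ be a multigraph in which each edge $\{u,v\}$ appears at most twice in $E(G)$, and let $\mathsf{VC}$ be a vertex cover of $G$. Assume every vertex of $G$ has even degree. Then there exists a multiset $\mathcal{C}$ of cycles in $G$ such that: (1) at most $2|\mathsf{VC}|^2$ cycles in $\mathcal{C}$ have length other than $4$; (2) the cycles in $\mathcal{C}$ of length other than $4$ are simple; (3) the multiset sum $\biguplus_{C\in\mathcal{C}}E(C)$ equals $E(G)$ as multisets.
   Context: A path in a multigraph is a sequence $(v_0,\dots,v_\ell)$ of vertices with $\{v_i,v_{i+1}\}$ an edge for all $0\le i<\ell$ (vertices and edges may repeat); its length is $\ell$. A cycle is a path with $v_0=v_\ell$; it is simple if $v_0,\dots,v_{\ell-1}$ are pairwise distinct. For a cycle $C=(v_0,\dots,v_\ell)$, $E(C)$ is the multiset $\{\{v_i,v_{i+1}\}:0\le i<\ell\}$ (with repetition). Degrees count edges with multiplicity. *)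

(* Defs.v *)
From mathcomp Require Import all_boot.
Set Implicit Arguments. Unset Strict Implicit. Unset Printing Implicit Defensive.

(* A loopless multigraph on a finite vertex type T is given by an edge-
   multiplicity function m : T -> T -> nat, with m x y = m y x and m x x = 0;
   m x y is the number of copies of the edge {x,y} in the multiset E(G). *)

Section Defs.
Variable T : finType.
Variable m : T -> T -> nat.

Definition mdeg (x : T) : nat := \sum_(y : T) m x y.

Definition vertex_cover (VC : {set T}) : Prop :=
  forall x y, 0 < m x y -> (x \in VC) || (y \in VC).

Definition is_cycle (s : seq T) : bool :=
  match s with
  | [::] => false
  | v0 :: r => path (fun x y => 0 < m x y) v0 r && (last v0 r == v0)
  end.
End Defs.

Section Defs2.
Variable T : eqType.

Definition cycle_length (s : seq T) : nat := (size s).-1.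

Definition simple_cycle (s : seq T) : bool :=
  match s with
  | [::] => false
  | v0 :: r => uniq (belast v0 r)
  end.

Definition edge_count (s : seq T) (x y : T) : nat :=
  count (fun p : T * T => ((p.1 == x) && (p.2 == y)) || ((p.1 == y) && (p.2 == x)))
        (zip s (behead s)).
End Defs2.

(* Main.v *)
Require Import Defs.
From mathcomp Require Import all_boot.
From mathcomp Require Import zify.
From Stdlib Require Import Classical.

Set Implicit Arguments. Unset Strict Implicit. Unset Printing Implicit Defensive.

Section Gen.
Variable I : finType.

Lemma sum_dec1 (P : pred I) (f g : I -> nat) i d :
  (forall j, P j -> g j <= f j) -> P i -> g i + d <= f i ->
  \sum_(j | P j) g j + d <= \sum_(j | P j) f j.
Proof.
move=> Hle Hi Hd; rewrite (bigD1 i Hi) [X in _ <= X](bigD1 i Hi) /=.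
rewrite addnAC; apply: leq_add => //.
by apply: leq_sum => j /andP [Hj _]; apply: Hle.
Qed.

Lemma sum_dec2 (P : pred I) (f g : I -> nat) i1 i2 d1 d2 :
  (forall j, P j -> g j <= f j) -> i1 != i2 -> P i1 -> P i2 ->
  g i1 + d1 <= f i1 -> g i2 + d2 <= f i2 ->
  \sum_(j | P j) g j + d1 + d2 <= \sum_(j | P j) f j.
Proof.
move=> Hle hne H1 H2 Hd1 Hd2.
rewrite (bigD1 i1 H1) [X in _ <= X](bigD1 i1 H1) /=.
have := @sum_dec1 (fun j => P j && (j != i1)) f g i2 d2.
rewrite H2 eq_sym hne => /(_ _ isT Hd2) h.
have : \sum_(i | P i && (i != i1)) g i + d2 <= \sum_(i | P i && (i != i1)) f i.
  apply: h => j /andP [Pj _]; exact: Hle.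
lia.
Qed.

Lemma sum_pos_ex (P : pred I) (f : I -> nat) :
  0 < \sum_(i | P i) f i -> exists i, P i /\ 0 < f i.
Proof.
move=> H; apply: NNPP => Hn.
suff E : \sum_(i | P i) f i = 0 by rewrite E in H.
apply: big1 => i Pi; case: (posnP (f i)) => // Hf.
by exfalso; apply: Hn; exists i.
Qed.

Lemma sum_split2 (P : pred I) (f : I -> nat) :
  2 <= \sum_(i | P i) f i ->
  (exists i, P i /\ 2 <= f i) \/
  (exists i j, [/\ P i, P j, i != j, 0 < f i & 0 < f j]).
Proof.
move=> H; case: (classic (exists i, P i /\ 2 <= f i)) => [h|hn]; [by left|right].
have /sum_pos_ex [i [Pi fi]] : 0 < \sum_(i | P i) f i by apply: leq_trans H.
have fi1 : f i <= 1.
  by rewrite leqNgt; apply/negP => h; apply: hn; exists i.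
move: H; rewrite (bigD1 i Pi) /= => H.
have /sum_pos_ex [j [/andP [Pj ji] fj]] : 0 < \sum_(j | P j && (j != i)) f j by lia.
by exists i, j; split => //; rewrite eq_sym.
Qed.

End Gen.

Section G.
Variable T : finType.
Implicit Types (a b c d x y z : T) (s r : seq T).

Definition mt (c d a b : T) : bool := ((c == a) && (d == b)) || ((c == b) && (d == a)).

Lemma ec_cons2 c d s a b :
  edge_count [:: c, d & s] a b = mt c d a b + edge_count (d :: s) a b.
Proof. by []. Qed.

Lemma ec1 c a b : edge_count [:: c] a b = 0. Proof. by []. Qed.

Lemma mtC c d a b : mt c d a b = mt d c a b.
Proof. by rewrite /mt orbC andbC [(d == b) && _]andbC. Qed.

Lemma ecC (s : seq T) a b : edge_count s a b = edge_count s b a.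
Proof. by apply: eq_count => p; rewrite orbC. Qed.

Lemma mt_same c d c' d' a b : mt c d a b -> mt c' d' a b ->
  ((c == c') && (d == d')) || ((c == d') && (d == c')).
Proof.
rewrite /mt; case/orP => /andP [/eqP -> /eqP ->];
case/orP => /andP [/eqP -> /eqP ->]; by rewrite !eqxx ?orbT.
Qed.

Lemma ec_mem s a b : 0 < edge_count s a b -> (a \in s) && (b \in s).
Proof.
elim: s => // c [|d s] IH //.
rewrite ec_cons2.
case H: (mt c d a b) => Hp.
  move: H; rewrite /mt => /orP [] /andP [/eqP -> /eqP ->]; by rewrite !inE !eqxx ?orbT.
move: Hp; rewrite add0n => /IH /andP [ha hb].
by apply/andP; split; rewrite in_cons ?ha ?hb orbT.
Qed.

Lemma ec_uniq s a b : uniq s -> edge_count s a b <= 1.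
Proof.
elim: s => // c [|d s] IH // /andP [hc hu].
rewrite ec_cons2.
case H: (mt c d a b); last by rewrite add0n IH.
case E: (edge_count (d :: s) a b) => [|k]; first by [].
exfalso. have /andP [ha hb] : (a \in d :: s) && (b \in d :: s) by apply: ec_mem; rewrite E.
move: H; rewrite /mt => /orP [] /andP [/eqP ca _].
- by move: hc; rewrite ca ha.
- by move: hc; rewrite ca hb.
Qed.

Lemma ec_rcons c s z a b :
  edge_count (rcons (c :: s) z) a b = edge_count (c :: s) a b + mt (last c s) z a b.
Proof.
elim: s c => [|d s IH] c /=; first by rewrite ec_cons2 ec1 addn0.
by rewrite ec_cons2 IH ec_cons2 addnA.
Qed.

Lemma orb_add (p q : bool) : ~~ (p && q) -> ((p || q) : nat) = p + q.
Proof. by case: p; case: q. Qed.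

Lemma sum_eq1 (b : bool) (d : T) : \sum_(y : T) (b && (d == y) : nat) = b.
Proof.
rewrite (bigD1 d) //= eqxx andbT big1 ?addn0 // => y.
by rewrite eq_sym => /negbTE ->; rewrite andbF.
Qed.

Lemma sum_mt c d x : c != d -> \sum_(y : T) (mt c d x y : nat) = (c == x) + (d == x).
Proof.
move=> cd.
have E : forall y, (mt c d x y : nat) = ((c == x) && (d == y)) + ((d == x) && (c == y)).
  move=> y; rewrite /mt orb_add; first by rewrite [(d == x) && _]andbC.
  apply/negP => /andP [/andP [/eqP e1 _] /andP [_ /eqP e2]].
  by move/eqP: cd; apply; rewrite e1 e2.
by rewrite (eq_bigr _ (fun y _ => E y)) big_split /= !sum_eq1.
Qed.

Variable m : T -> T -> nat.
Hypothesis msym : forall x y, m x y = m y x.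
Hypothesis mloop : forall x, m x x = 0.

Definition R := fun x y => 0 < m x y.

Lemma R_neq x y : 0 < m x y -> x != y.
Proof. by move=> h; apply/eqP => e; move: h; rewrite e mloop. Qed.

Lemma mt_m c d a b : mt c d a b -> m a b = m c d.
Proof. by case/orP => /andP [/eqP <- /eqP <-] //; rewrite msym. Qed.

Lemma ec_pos_m c s a b :
  path (fun x y => 0 < m x y) c s -> 0 < edge_count (c :: s) a b -> 0 < m a b.
Proof.
elim: s c => // d s IH c /= /andP [hcd hp]. rewrite ec_cons2.
case H: (mt c d a b); first by rewrite (mt_m H).
by rewrite add0n; apply: IH.
Qed.

Definition degC (s : seq T) x := \sum_(y : T) edge_count s x y.

Lemma degC_walk c s x : path (fun x y => 0 < m x y) c s ->
  degC (c :: s) x = count_mem x (belast c s) + count_mem x s.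
Proof.
rewrite /degC; elim: s c => [|d s IH] c /=.
  by move=> _; rewrite big1.
move=> /andP [hcd hp].
rewrite (eq_bigr _ (fun y _ => ec_cons2 c d s x y)) big_split /= sum_mt ?R_neq //.
rewrite IH //= -!addnA; congr (_ + _); by rewrite addnCA.
Qed.

Lemma degC_even C x : is_cycle m C -> ~~ odd (degC C x).
Proof.
case: C => // v0 r /andP [hp /eqP hl].
rewrite degC_walk //.
have : count_mem x (v0 :: r) = count_mem x (belast v0 r) + (last v0 r == x).
  by rewrite lastI -cats1 count_cat /= addn0.
rewrite hl /= => h.
have -> : count_mem x (belast v0 r) = count_mem x r.
  by apply/eqP; rewrite -(eqn_add2r (v0 == x)) -h addnC.
by rewrite addnn odd_double.
Qed.


Lemma simple_ec y s a b : uniq (y :: s) -> 1 < size s ->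
  path (fun x y => 0 < m x y) y (rcons s y) ->
  edge_count (y :: rcons s y) a b <= m a b.
Proof.
move=> hu hs hp.
case E: (edge_count (y :: rcons s y) a b) => [//|k].
have hm : 0 < m a b by apply: (ec_pos_m (c := y) (s := rcons s y)); rewrite // E.
suff : edge_count (y :: rcons s y) a b <= 1 by rewrite E; lia.
case: s hu hs {hp E} => [|x [|x2 q]] // hu _.
rewrite -rcons_cons ec_rcons /=.
case H: (mt (last x2 q) y a b); last by rewrite addn0; apply: ec_uniq.
move: hu => /andP [hy /andP [hx hq]].
rewrite ec_cons2.
have -> : edge_count [:: x, x2 & q] a b = 0.
  case E2: (edge_count [:: x, x2 & q] a b) => [//|k2].
  have /andP [ha hb] : (a \in [:: x, x2 & q]) && (b \in [:: x, x2 & q]) by apply: ec_mem; rewrite E2.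
  move: H; rewrite /mt => /orP [] /andP [_ /eqP e].
  - by move: hy; rewrite e hb.
  - by move: hy; rewrite e ha.
case H2: (mt y x a b) => //.
move: (mt_same H2 H) => /orP [] /andP [/eqP e1 /eqP e2].
- by move: hy; rewrite -e2 !inE eqxx.
- by move: hx; rewrite e2 mem_last.
Qed.

Lemma double_ec c d a b : 2 <= m c d -> 2 * mt c d a b <= m a b.
Proof. by case H: (mt c d a b); rewrite // (mt_m H) muln1. Qed.

Lemma two_pairs c d c' d' a b : ~~ (mt c d a b && mt c' d' a b) ->
  2 <= m c d -> 2 <= m c' d' -> 2 * mt c d a b + 2 * mt c' d' a b <= m a b.
Proof.
case h1: (mt c d a b); case h2: (mt c' d' a b) => //= _ H1 H2.
- by rewrite (mt_m h1) muln0 addn0 muln1.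
- by rewrite (mt_m h2) muln0 add0n muln1.
Qed.

Definition good (C : seq T) :=
  [/\ is_cycle m C, simple_cycle C, (forall a b, edge_count C a b <= m a b) & 1 < size C].

Lemma two_cycle x z : 2 <= m x z -> good [:: x; z; x].
Proof.
move=> h; have hp : 0 < m x z by apply: leq_trans h.
have hxz := R_neq hp.
split => //.
- by rewrite /is_cycle /= hp msym hp eqxx.
- by rewrite /simple_cycle /= inE hxz.
- move=> a b; rewrite !ec_cons2 ec1 addn0 (mtC z x) addnn -mul2n.
  exact: double_ec.
Qed.

Hypothesis heven : forall x, ~~ odd (mdeg m x).

Lemma uniq_size (s : seq T) : uniq s -> size s <= #|T|.
Proof. by move/card_uniqP <-; apply: max_card. Qed.

Lemma cycle_step x y0 q : uniq [:: x, y0 & q] -> path R x (y0 :: q) ->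
  (exists C, good C) \/ (exists y, uniq [:: y, x, y0 & q] /\ path R y [:: x, y0 & q]).
Proof.
move=> hu hp.
have hxy0 : 0 < m x y0 by move: hp => /= /andP [].
have hdeg : 2 <= mdeg m x.
  have h1 : 0 < mdeg m x.
    by rewrite /mdeg (bigD1 y0) //=; apply: leq_trans hxy0 (leq_addr _ _).
  by move: (heven x) h1; case: (mdeg m x) => [|[|n]].
case: (sum_split2 hdeg) => [[z [_ hz]] | [z1 [z2 [_ _ hne h1 h2]]]].
  by left; exists [:: x; z; x]; apply: two_cycle.
have [y [hy hyy0]] : exists y, 0 < m x y /\ y != y0.
  case: (eqVneq z1 y0) => [e|ne]; last by exists z1.
  by exists z2; split => //; rewrite -e eq_sym.
case: (boolP (y \in y0 :: q)) => hin.
- left.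
  have hyq : y \in q by move: hin; rewrite inE (negbTE hyy0).
  case/splitPr: hyq hu hp => q1 q2 hu hp.
  set s := [:: x, y0 & q1].
  have hu' : uniq (s ++ y :: q2) by [].
  have hp' : path R x ((y0 :: q1) ++ y :: q2) by [].
  move: hu'; rewrite cat_uniq => /andP [us /andP [hh _]].
  have ys : y \notin s by move: hh; apply: contra => hys; rewrite /= hys.
  move: hp'; rewrite cat_path => /andP [p1 /= /andP [p2 _]].
  have hps : path R y (rcons s y).
    move: p1 => /= /andP [p1a p1b].
    by rewrite rcons_path /= p1a p1b p2 /R msym hy.
  exists (y :: rcons s y); split.
  + by rewrite /is_cycle hps last_rcons eqxx.
  + by rewrite /simple_cycle belast_rcons /= ys.
  + move=> a b; apply: simple_ec => //=; by rewrite ys.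
  + by rewrite /= size_rcons.
- right; exists y; split.
  + rewrite [uniq _]/= in_cons negb_or hin andbT eq_sym R_neq //=.
  + by rewrite /= -/(path R x (y0 :: q)) hp andbT /R msym hy.
Qed.

Lemma find_cycle x y : 0 < m x y -> exists C, good C.
Proof.
move=> hxy.
suff H : forall k x y0 q, #|T| <= size q + k -> uniq [:: x, y0 & q] -> path R x (y0 :: q) ->
  exists C, good C.
  apply: (H #|T| x y [::]) => //.
  by rewrite /= inE andbT R_neq.
  by rewrite /= /R hxy.
elim=> [|k IH] x0 y0 q hk hu hp; case: (cycle_step hu hp) => // [[y1 [hu' hp']]].
  by move: (uniq_size hu') => /= h; have := leq_trans h hk; lia.
by apply: (IH y1 x0 (y0 :: q)) => //; rewrite [size _]/=; lia.
Qed.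
End G.

Section B.
Variable T : finType.
Variable VC : {set T}.
Implicit Types (a b c d u v w x y z : T) (s r : seq T) (m : T -> T -> nat).

Definition pc m u v := \sum_(w | w \notin VC)
  (if u == v then (m u w)./2 else minn (m u w) (m v w)).
Definition Fm m u v := m u v + (if u == v then 2 else 1) * (0 < pc m u v).
Definition Bm m := \sum_(p | p \in setX VC VC) Fm m p.1 p.2.
Definition msub m (C : seq T) := fun x y => m x y - edge_count C x y.
Definition total m := \sum_(p : T * T) m p.1 p.2.
Definition fourwalk m (W : seq T) :=
  [/\ is_cycle m W, cycle_length W = 4 & forall a b, edge_count W a b <= m a b].

Lemma term_mono m m' u v w : (forall x y, m' x y <= m x y) ->
  (if u == v then (m' u w)./2 else minn (m' u w) (m' v w)) <=
  (if u == v then (m u w)./2 else minn (m u w) (m v w)).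
Proof.
move=> H; case: (u == v); first by apply: half_leq.
rewrite leq_min; apply/andP; split.
  exact: leq_trans (geq_minl _ _) (H _ _).
exact: leq_trans (geq_minr _ _) (H _ _).
Qed.

Lemma pc_mono m m' u v : (forall x y, m' x y <= m x y) -> pc m' u v <= pc m u v.
Proof. by move=> H; apply: leq_sum => w _; apply: term_mono. Qed.

Lemma Fm_mono m m' u v : (forall x y, m' x y <= m x y) -> Fm m' u v <= Fm m u v.
Proof.
move=> H; rewrite /Fm; apply: leq_add (H u v) _; apply: leq_mul => //.
have hp := pc_mono u v H.
case: (ltnP 0 (pc m' u v)) => h //=.
by rewrite (leq_trans h hp).
Qed.

Lemma Fm_dec m m' u v : (forall x y, m' x y <= m x y) -> m' u v + 1 <= m u v ->
  Fm m' u v + 1 <= Fm m u v.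
Proof.
move=> H h; rewrite /Fm addnAC; apply: leq_add h _; apply: leq_mul => //.
have hp := pc_mono u v H.
case: (ltnP 0 (pc m' u v)) => h' //=.
by rewrite (leq_trans h' hp).
Qed.

Lemma Bm_mono m m' : (forall x y, m' x y <= m x y) -> Bm m' <= Bm m.
Proof. by move=> H; apply: leq_sum => p _; apply: Fm_mono. Qed.

Lemma Bm_bound m : (forall x, m x x = 0) -> (forall x y, m x y <= 2) ->
  Bm m <= 3 * (#|VC| * #|VC|).
Proof.
move=> mloop mle2; rewrite /Bm -cardsX.
apply: leq_trans (_ : \sum_(p | p \in setX VC VC) 3 <= _).
  apply: leq_sum => [[u v]] _ /=; rewrite /Fm.
  case: eqP => [->|ne]; first by rewrite mloop; case: (0 < _).
  by have := mle2 u v; case: (0 < _); rewrite ?muln1 ?muln0; lia.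
by rewrite sum_nat_const mulnC.
Qed.

Lemma F_drop m m' u v : (forall x y, m' x y <= m x y) ->
  pc m' u v + 1 <= pc m u v -> pc m u v <= 1 ->
  Fm m' u v + (if u == v then 2 else 1) <= Fm m u v.
Proof.
move=> H h1 h2; rewrite /Fm.
have -> : (0 < pc m' u v) = false by lia.
have -> : (0 < pc m u v) = true by lia.
have := H u v; case: (u == v) => /=; lia.
Qed.

Lemma neqVC x y : x \in VC -> y \notin VC -> x != y.
Proof. by move=> hx hy; apply/eqP => e; move: hy; rewrite -e hx. Qed.

End B.

Section Main.
Variable T : finType.
Variable VC : {set T}.
Implicit Types (a b c d u v w x y z : T) (s r : seq T) (m : T -> T -> nat).

Lemma is_cycle_mono m m' C : (forall x y, m' x y <= m x y) -> is_cycle m' C -> is_cycle m C.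
Proof.
move=> H; case: C => // v0 r /andP [hp hl]; apply/andP; split => //.
by apply: sub_path hp => x y h; apply: leq_trans h (H x y).
Qed.

Section Fixm.
Variable m : T -> T -> nat.
Hypothesis msym : forall x y, m x y = m y x.
Hypothesis mloop : forall x, m x x = 0.
Hypothesis mle2 : forall x y, m x y <= 2.
Hypothesis hVC : vertex_cover m VC.

Lemma pos2 x y : 2 <= m x y -> 0 < m x y.
Proof. by move=> h; apply: leq_trans h. Qed.

Lemma walk1 u v w : u != v -> 2 <= m u w -> 2 <= m v w -> fourwalk m [:: u; w; v; w; u].
Proof.
move=> huv h1 h2.
have p1 := pos2 h1; have p2 := pos2 h2.
have huw := R_neq mloop p1; have hvw := R_neq mloop p2.
split => //.
- by rewrite /is_cycle /= p1 (msym w v) p2 (msym w u) p1 eqxx.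
- move=> a b; rewrite !ec_cons2 ec1 addn0 (mtC w v) (mtC w u).
  have : ~~ (mt u w a b && mt v w a b).
    apply/negP => /andP [q1 q2]; move: (mt_same q1 q2).
    by rewrite (negbTE huv) (negbTE huw).
  move/(two_pairs msym)/(_ h1 h2); lia.
Qed.

Lemma walk3 u w1 w2 : w1 != w2 -> 2 <= m u w1 -> 2 <= m u w2 -> fourwalk m [:: u; w1; u; w2; u].
Proof.
move=> hne h1 h2.
have p1 := pos2 h1; have p2 := pos2 h2.
have huw1 := R_neq mloop p1; have huw2 := R_neq mloop p2.
split => //.
- by rewrite /is_cycle /= p1 (msym w1 u) p1 p2 (msym w2 u) p2 eqxx.
- move=> a b; rewrite !ec_cons2 ec1 addn0 (mtC w1 u) (mtC w2 u).
  have : ~~ (mt u w1 a b && mt u w2 a b).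
    apply/negP => /andP [q1 q2]; move: (mt_same q1 q2).
    by rewrite (negbTE hne) (negbTE huw2) !andbF.
  move/(two_pairs msym)/(_ h1 h2); lia.
Qed.

Lemma walk2 u v w1 w2 : u \in VC -> v \in VC -> w1 \notin VC -> w2 \notin VC ->
  u != v -> w1 != w2 -> 0 < m u w1 -> 0 < m v w1 -> 0 < m u w2 -> 0 < m v w2 ->
  fourwalk m [:: u; w1; v; w2; u].
Proof.
move=> hu hv hw1 hw2 huv hne p1 p2 p3 p4.
have hp : path (fun x y => 0 < m x y) u (rcons [:: w1; v; w2] u).
  by rewrite /= p1 (msym w1 v) p2 p4 (msym w2 u) p3.
split => //.
- by rewrite /is_cycle hp /= eqxx.
- move=> a b; apply: (simple_ec msym (y := u) (s := [:: w1; v; w2])) => //.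
  rewrite /= !inE !negb_or (neqVC hu hw1) (neqVC hu hw2) huv /=.
  by rewrite hne eq_sym (neqVC hv hw1) (neqVC hv hw2).
Qed.

Lemma pc_le1 u v : u \in VC -> v \in VC -> ~ (exists W, fourwalk m W) -> pc VC m u v <= 1.
Proof.
move=> hu hv hn; rewrite leqNgt; apply/negP => h; apply: hn.
case: (sum_split2 h) => [[w [hw h2]] | [w1 [w2 [hw1 hw2 hne h1 h2]]]].
- move: h2; case: eqP => [e|ne] h2.
    by have := leq_trans h2 (half_leq (mle2 u w)).
  move: h2; rewrite leq_min => /andP [q1 q2].
  by exists [:: u; w; v; w; u]; apply: walk1 => //; apply/eqP.
- move: h1 h2; case: eqP => [e|ne] h1 h2.
    subst v.
    have hA : 2 <= m u w1 by move: (mle2 u w1) h1; case: (m u w1) => [|[|[|k]]].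
    have hB : 2 <= m u w2 by move: (mle2 u w2) h2; case: (m u w2) => [|[|[|k]]].
    by exists [:: u; w1; u; w2; u]; apply: walk3.
  move: h1 h2; rewrite !leq_min => /andP [q1 q2] /andP [q3 q4].
  exists [:: u; w1; v; w2; u]; apply: walk2 => //; apply/eqP => //.
Qed.

Variable C : seq T.
Hypothesis hcyc : is_cycle m C.
Hypothesis hle : forall a b, edge_count C a b <= m a b.

Lemma msub_le x y : msub m C x y <= m x y.
Proof. exact: leq_subr. Qed.

Lemma msub_sym x y : msub m C x y = msub m C y x.
Proof. by rewrite /msub msym ecC. Qed.

Lemma msub_loop x : msub m C x x = 0.
Proof. by rewrite /msub mloop. Qed.

Lemma msub_le2 x y : msub m C x y <= 2.
Proof. exact: leq_trans (msub_le x y) (mle2 x y). Qed.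

Lemma msub_vc : vertex_cover (msub m C) VC.
Proof. by move=> x y h; apply: hVC; apply: leq_trans h (msub_le x y). Qed.

Lemma msub_even : (forall x, ~~ odd (mdeg m x)) -> forall x, ~~ odd (mdeg (msub m C) x).
Proof.
move=> heven x.
have E : mdeg m x = mdeg (msub m C) x + degC C x.
  rewrite /mdeg /degC -big_split; apply: eq_bigr => y _; rewrite /msub /=; by rewrite subnK.
have Hd := degC_even mloop x hcyc.
by move: (heven x); rewrite E oddD (negbTE Hd) addbF.
Qed.

Lemma msub_total a b : 0 < edge_count C a b -> total (msub m C) < total m.
Proof.
move=> h; rewrite /total.
have := @sum_dec1 _ xpredT (fun p => m p.1 p.2) (fun p => msub m C p.1 p.2) (a, b) 1
  (fun j _ => msub_le j.1 j.2) isT.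
move=> H; rewrite -addn1; apply: H.
by rewrite /msub /= addn1; have := hle a b; lia.
Qed.

Lemma B_dec : ~ (exists W, fourwalk m W) -> 1 < size C ->
  Bm VC (msub m C) + 2 <= Bm VC m.
Proof.
move=> hn hsize.
set m' := msub m C.
have mono : forall x y, m' x y <= m x y := msub_le.
have [a [b hab]] : exists a b, 0 < edge_count C a b.
  move: hsize; case: (C) => [|c0 [|c1 r]] // _.
  by exists c0, c1; rewrite ec_cons2 /mt !eqxx.
have hmab : 0 < m a b := leq_trans hab (hle a b).
have decr : forall x y, 0 < edge_count C x y -> m' x y + 1 <= m x y.
  by move=> x y h; rewrite /m' /msub; have := hle x y; lia.
have Fmono : forall j, j \in setX VC VC -> Fm VC m' j.1 j.2 <= Fm VC m j.1 j.2.
  by move=> j _; apply: Fm_mono.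
rewrite /Bm -[2]/(1 + 1) addnA.
case: (boolP ((a \in VC) && (b \in VC))) => [/andP [ha hb] | hnot].
  have Fd : forall x y, 0 < edge_count C x y -> Fm VC m' x y + 1 <= Fm VC m x y.
    by move=> x y h; apply: Fm_dec => //; apply: decr.
  apply: (sum_dec2 (P := fun p => p \in setX VC VC) (i1 := (a,b)) (i2 := (b,a))) => //.
  - by rewrite xpair_eqE (negbTE (R_neq mloop hmab)).
  - by rewrite in_setX ha hb.
  - by rewrite in_setX ha hb.
  - exact: Fd.
  - by apply: Fd; rewrite ecC.
have [w [z [hw hwz]]] : exists w z, w \notin VC /\ 0 < edge_count C w z.
  move: (hVC hmab) hnot; case ha: (a \in VC); case hb: (b \in VC) => //= _ _.
  - by exists b, a; rewrite hb ecC.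
  - by exists a, b; rewrite ha.
have hvc : forall y, 0 < edge_count C w y -> y \in VC.
  move=> y h; have : 0 < m w y := leq_trans h (hle w y).
  by move/hVC; rewrite (negbTE hw).
have hdeg : 2 <= \sum_(y : T) edge_count C w y.
  have h1 : 0 < \sum_(y : T) edge_count C w y.
    by rewrite (bigD1 z) //=; apply: leq_trans hwz (leq_addr _ _).
  by move: (degC_even mloop w hcyc) h1; rewrite /degC; case: (\sum_(y : T) _) => [|[|n]].
case: (sum_split2 hdeg) => [[u [_ hu2]] | [u1 [u2 [_ _ hne h1 h2]]]].
- have huVC : u \in VC by apply: hvc; apply: leq_trans hu2.
  have mu2 : m u w = 2.
    by apply/eqP; rewrite eqn_leq mle2 msym; apply: leq_trans hu2 (hle w u).
  rewrite -addnA addnn /=.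
  apply: (sum_dec1 (P := fun p => p \in setX VC VC) (i := (u,u))) => //.
    by rewrite in_setX huVC.
  have := @F_drop _ VC m m' u u mono; rewrite eqxx; apply.
  + apply: (sum_dec1 (P := fun w => w \notin VC) (i := w)) => //.
      by move=> j _; apply: term_mono.
    rewrite eqxx /m' /msub ecC mu2.
    by have : 2 <= edge_count C w u := hu2; case: (edge_count C w u) => [|[|k]].
  + by apply: pc_le1.
- have hu1 : u1 \in VC by apply: hvc.
  have hu2 : u2 \in VC by apply: hvc.
  have drop : forall x y, x != y -> 0 < edge_count C w x -> 0 < edge_count C w y ->
      x \in VC -> y \in VC -> Fm VC m' x y + 1 <= Fm VC m x y.
    move=> x y hxy hx hy hxV hyV.
    have := @F_drop _ VC m m' x y mono; rewrite (negbTE hxy); apply.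
    + apply: (sum_dec1 (P := fun w => w \notin VC) (i := w)) => //.
        by move=> j _; apply: term_mono.
      rewrite (negbTE hxy) /m' /msub (ecC C x w) (ecC C y w).
      have := hle x w; have := hle y w; rewrite (ecC C x w) (ecC C y w); lia.
    + by apply: pc_le1.
  apply: (sum_dec2 (P := fun p => p \in setX VC VC) (i1 := (u1,u2)) (i2 := (u2,u1))) => //.
  - by rewrite xpair_eqE (negbTE hne).
  - by rewrite in_setX hu1 hu2.
  - by rewrite in_setX hu1 hu2.
  - exact: drop.
  - by apply: drop; rewrite // eq_sym.
Qed.

End Fixm.
End Main.

Lemma main_gen (T : finType) (VC : {set T}) n : forall m : T -> T -> nat,
  total m < n ->
  (forall x y, m x y = m y x) -> (forall x, m x x = 0) -> (forall x y, m x y <= 2) ->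
  vertex_cover m VC -> (forall x, ~~ odd (mdeg m x)) ->
  exists cs : seq (seq T),
    [/\ all (is_cycle m) cs,
        2 * count (fun C => cycle_length C != 4) cs <= Bm VC m,
        (forall C, C \in cs -> cycle_length C != 4 -> simple_cycle C) &
        (forall x y, \sum_(C <- cs) edge_count C x y = m x y)].
Proof.
elim: n => [|n IH] m ht msym mloop mle2 hVC heven; first by [].
case: (classic (exists a b, 0 < m a b)) => [[a [b hab]] | hz]; last first.
  exists [::]; split => // x y; rewrite big_nil.
  case: (posnP (m x y)) => // h; exfalso; apply: hz; by exists x, y.
have rem : forall C, is_cycle m C -> (forall a b, edge_count C a b <= m a b) -> 1 < size C ->
  exists cs', [/\ all (is_cycle m) cs',
        2 * count (fun C => cycle_length C != 4) cs' <= Bm VC (msub m C),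
        (forall C, C \in cs' -> cycle_length C != 4 -> simple_cycle C) &
        (forall x y, edge_count C x y + \sum_(C <- cs') edge_count C x y = m x y)].
  move=> C hc hle hs.
  have [a' [b' hab']] : exists a b, 0 < edge_count C a b.
    move: hs; case: (C) => [|c0 [|c1 r]] // _.
    by exists c0, c1; rewrite ec_cons2 /mt !eqxx.
  have ht' : total (msub m C) < n.
    by have := msub_total hc hle hab'; lia.
  have [cs' [h1 h2 h3 h4]] := IH (msub m C) ht' (msub_sym msym C) (msub_loop mloop C)
    (msub_le2 mle2 C) (msub_vc hVC (C := C)) (msub_even mloop hc hle heven).
  exists cs'; split => //.
    by apply: sub_all h1 => C'; apply: is_cycle_mono => x y; apply: msub_le.
  by move=> x y; rewrite h4 /msub subnKC.
case: (classic (exists W, fourwalk m W)) => [[W [hW hl hle]] | hn].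
  have hs : 1 < size W by move: hl; rewrite /cycle_length; case: (size W) => [|[|k]].
  have [cs' [h1 h2 h3 h4]] := rem W hW hle hs.
  exists (W :: cs'); split.
  - by rewrite /= hW h1.
  - rewrite /= hl /=; apply: leq_trans h2 _; apply: Bm_mono => x y; apply: msub_le.
  - move=> C; rewrite inE => /orP [/eqP -> | hC]; first by rewrite hl.
    exact: h3.
  - by move=> x y; rewrite big_cons h4.
have [C [hc hsimp hle hs]] := find_cycle msym mloop heven hab.
case: (eqVneq (cycle_length C) 4) => [e | ne].
  by exfalso; apply: hn; exists C; split.
have [cs' [h1 h2 h3 h4]] := rem C hc hle hs.
exists (C :: cs'); split.
- by rewrite /= hc h1.
- rewrite /= ne /=; have := B_dec msym mloop mle2 hVC hc hle hn hs.
  by move=> H; apply: leq_trans H; rewrite mulnDr muln1 addnC leq_add2r.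
- move=> C'; rewrite inE => /orP [/eqP -> | hC] //; exact: h3.
- by move=> x y; rewrite big_cons h4.
Qed.

Theorem mainTheorem8 (T : finType) (m : T -> T -> nat) (VC : {set T})
  (msym : forall x y, m x y = m y x)
  (mloopless : forall x, m x x = 0)
  (mle2 : forall x y, m x y <= 2)
  (hVC : vertex_cover m VC)
  (heven : forall x, ~~ odd (mdeg m x)) :
  exists cs : seq (seq T),
    [/\ all (is_cycle m) cs,
        count (fun C => cycle_length C != 4) cs <= 2 * #|VC| ^ 2,
        (forall C, C \in cs -> cycle_length C != 4 -> simple_cycle C) &
        (forall x y, \sum_(C <- cs) edge_count C x y = m x y)].
Proof.
have [cs [h1 h2 h3 h4]] := main_gen (ltnSn (total m)) msym mloopless mle2 hVC heven.
exists cs; split => //.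
have hb := Bm_bound VC mloopless mle2.
have -> : #|VC| ^ 2 = #|VC| * #|VC| by rewrite expnS expn1.
move: (leq_trans h2 hb); set X := #|VC| * #|VC|; lia.
Qed.
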